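(* For all integers $m,n\ge 0$ and all real $t$, $$H_{m,n}(t)=m!\,n!\left(\frac{1}{\sqrt2}\right)^{m+n}\sum_{j=0}^{n}\sum_{k=j}^{m}\frac{(-1)^j}{j!\,(k-j)!}\,H_{k-j}(0)\,\frac{H_{m-k,n-j}(\sqrt2\,t)}{(m-k)!\,(n-j)!},$$ where an inner sum with empty range ($j>m$) is zero.
   Context: For integers $m\ge 0$, the Hermite polynomial is $H_m(x)=(-1)^m e^{x^2}\frac{d^m}{dx^m}\big(e^{-x^2}\big)$. For integers $m,n\ge 0$, the two-index Hermite polynomial is $H_{m,n}(x)=\left(-\frac{d}{dx}+2x\right)^m(x^n)$, i.e. the operator $f\mapsto -f'+2xf$ applied $m$ times to $x^n$. *)

(* Defs.v *)
From HB Require Import structures.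
From mathcomp Require Import all_boot all_order all_algebra.
Set Implicit Arguments. Unset Strict Implicit. Unset Printing Implicit Defensive.
Import Order.TTheory GRing.Theory Num.Theory.
Local Open Scope ring_scope.

Definition herm_op (R : nzRingType) (p : {poly R}) : {poly R} :=
  - p^`() + ('X * p) *+ 2.

Definition hermite2 (R : nzRingType) (m n : nat) : {poly R} :=
  iter m (@herm_op R) 'X^n.

(* Hermite polynomial H_m(x) = (-1)^m e^{x^2} (d/dx)^m e^{-x^2}.
   Since d/dx (p e^{-x^2}) = (p' - 2 x p) e^{-x^2}, this equals
   (2x - d/dx)^m 1, which is what we use. *)
Definition hermite (R : nzRingType) (m : nat) : {poly R} :=
  iter m (@herm_op R) 1.

(* Main.v *)
Require Import Defs.
From HB Require Import structures.
From mathcomp Require Import all_boot all_order all_algebra.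
From mathcomp Require Import ring zify.
Import Order.TTheory GRing.Theory Num.Theory.
Local Open Scope ring_scope.


Lemma herm_opB (R : comNzRingType) (p q : {poly R}) :
  herm_op (p - q) = herm_op p - herm_op q.
Proof. rewrite /herm_op derivB; ring. Qed.

Lemma herm_opMn (R : comNzRingType) (p : {poly R}) k :
  herm_op (p *+ k) = herm_op p *+ k.
Proof. rewrite /herm_op derivMn; ring. Qed.

Lemma herm_opX (R : comNzRingType) (p : {poly R}) :
  herm_op ('X * p) = 'X * herm_op p - p.
Proof. rewrite /herm_op derivM derivX; ring. Qed.

Lemma iter_herm_X (R : comNzRingType) m (p : {poly R}) :
  iter m (@herm_op R) ('X * p) =
  'X * iter m (@herm_op R) p - iter m.-1 (@herm_op R) p *+ m.
Proof.
elim: m => [|m IH]; first by rewrite /= mulr0n subr0.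
rewrite iterS IH herm_opB herm_opX herm_opMn.
have -> : herm_op (iter m.-1 (@herm_op R) p) *+ m = iter m (@herm_op R) p *+ m.
  by case: m {IH} => [|m] //; rewrite !mulr0n.
rewrite /= ; ring.
Qed.

Lemma hermite2S (R : comNzRingType) m n :
  hermite2 R m n.+1 = 'X * hermite2 R m n - hermite2 R m.-1 n *+ m.
Proof. by rewrite /hermite2 exprS iter_herm_X. Qed.

Lemma hermite2_0 (R : comNzRingType) m : hermite2 R m 0 = hermite R m.
Proof. by rewrite /hermite2 expr0. Qed.

Lemma herm_op_deriv (R : comNzRingType) (p : {poly R}) :
  (herm_op p)^`() = herm_op (p^`()) + p *+ 2.
Proof. rewrite /herm_op derivD derivN derivMn derivM derivX; ring. Qed.

Lemma hermite_deriv (R : comNzRingType) k :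
  (hermite R k)^`() = hermite R k.-1 *+ (2 * k).
Proof.
elim: k => [|k IH]; first by rewrite /hermite /= -polyC1 derivC muln0 mulr0n.
rewrite /hermite iterS -/(hermite R k) herm_op_deriv IH herm_opMn.
case: k IH => [|k] IH; first by rewrite muln0 mulr0n add0r.
rewrite /hermite iterS /=. rewrite -/(hermite R k) -/(hermite R k.+1).
rewrite mulnS mulSn. ring.
Qed.

Lemma hermiteS (R : comNzRingType) k :
  hermite R k.+1 = 'X * hermite R k *+ 2 - hermite R k.-1 *+ (2 * k).
Proof.
rewrite {1}/hermite iterS -/(hermite R k) {1}/herm_op hermite_deriv; ring.
Qed.

Set Implicit Arguments. Unset Strict Implicit.


Definition sh (R : rcfType) (f : nat -> R) (k : nat) : R :=
  if k is k'.+1 then f k' else 0.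
Definition hh (R : rcfType) (x : R) k : R := (hermite R k).[x] / (k`!)%:R.
Definition qq (R : rcfType) (x : R) m n : R :=
  (hermite2 R m n).[x] / ((m`!)%:R * (n`!)%:R).

Lemma fact_neq0 (R : rcfType) k : (k`!)%:R != 0 :> R.
Proof. by rewrite pnatr_eq0 -lt0n fact_gt0. Qed.

Lemma Sneq0 (R : rcfType) k : (k.+1)%:R != 0 :> R.
Proof. by rewrite pnatr_eq0. Qed.

Lemma n1 (R : rcfType) k : 1 + k%:R != 0 :> R.
Proof. by rewrite addrC natr1 pnatr_eq0. Qed.
Lemma n2 (R : rcfType) k : 2 + k%:R != 0 :> R.
Proof. by rewrite addrC -natrD pnatr_eq0 addn2. Qed.
Ltac nz := rewrite ?fact_neq0 ?n1 ?n2 ?Sneq0.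

Lemma hhS (R : rcfType) (x : R) k :
  (k.+1)%:R * hh x k.+1 = 2 * x * hh x k - 2 * sh (hh x) k.
Proof.
rewrite /hh hermiteS hornerD hornerN !hornerMn hornerM hornerX factS natrM.
case: k => [|k].
  rewrite /= hornerC /= fact0. by field.
rewrite /sh /hh (factS k) natrM.
set A := (hermite R k.+1).[x]; set B := (hermite R k).[x].
have h1 := fact_neq0 R k; have h2 := Sneq0 R k; have h3 := Sneq0 R k.+1.
field; by nz.
Qed.

Lemma qqS (R : rcfType) (x : R) m n :
  (n.+1)%:R * qq x m n.+1 = x * qq x m n - sh (fun m => qq x m n) m.
Proof.
rewrite /qq hermite2S hornerD hornerN hornerMn hornerM hornerX (factS n) natrM.
case: m => [|m].
  rewrite /= mulr0n fact0. field; by nz.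
rewrite /sh (factS m) natrM.
have h3 := fact_neq0 R m; have h4 := Sneq0 R m.
field; by nz.
Qed.


Definition conv (R : rcfType) (f g : nat -> R) M :=
  \sum_(i < M.+1) f i * g (M - i)%N.

Lemma conv_shl (R : rcfType) (f g : nat -> R) M :
  conv (sh f) g M = sh (conv f g) M.
Proof.
rewrite /conv; case: M => [|M]; first by rewrite big_ord1 /= mul0r.
rewrite big_ord_recl /= mul0r add0r; apply: eq_bigr => i _.
by rewrite /bump /= add1n subSS.
Qed.

Lemma conv_shr (R : rcfType) (f g : nat -> R) M :
  conv f (sh g) M = sh (conv f g) M.
Proof.
rewrite /conv; case: M => [|M]; first by rewrite big_ord1 /= mulr0.
rewrite big_ord_recr /= subnn mulr0 addr0; apply: eq_bigr => i _.
by rewrite /= subSn // -ltnS.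
Qed.

Lemma conv_leib (R : rcfType) (f g : nat -> R) M :
  (M.+1)%:R * conv f g M.+1 =
  conv (fun i => (i.+1)%:R * f i.+1) g M + conv f (fun i => (i.+1)%:R * g i.+1) M.
Proof.
rewrite /conv mulr_sumr.
have -> : \sum_(i < M.+2) (M.+1)%:R * (f i * g (M.+1 - i)%N) =
   \sum_(i < M.+2) ((i%:R * f i) * g (M.+1 - i)%N) +
   \sum_(i < M.+2) (f i * ((M.+1 - i)%N%:R * g (M.+1 - i)%N)).
  rewrite -big_split /=; apply: eq_bigr => i _.
  have : (M.+1)%:R = i%:R + (M.+1 - i)%N%:R :> R.
    by rewrite -natrD subnKC // -ltnS.
  move=> ->; ring.
congr (_ + _).
  rewrite big_ord_recl /= mul0r mul0r add0r; apply: eq_bigr => i _.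
  by rewrite /bump /= add1n subSS.
rewrite big_ord_recr /= subnn mul0r mulr0 addr0; apply: eq_bigr => i _.
by rewrite /= subSn // -ltnS.
Qed.

Lemma conv_extR (R : rcfType) (f g g' : nat -> R) M :
  (forall i, g i = g' i) -> conv f g M = conv f g' M.
Proof. by move=> H; apply: eq_bigr => i _; rewrite H. Qed.

Lemma conv_extL (R : rcfType) (f f' g : nat -> R) M :
  (forall i, f i = f' i) -> conv f g M = conv f' g M.
Proof. by move=> H; apply: eq_bigr => i _; rewrite H. Qed.

Lemma conv_linR (R : rcfType) (f g h : nat -> R) a b M :
  conv f (fun i => a * g i - b * h i) M = a * conv f g M - b * conv f h M.
Proof.
rewrite /conv !mulr_sumr -sumrB; apply: eq_bigr => i _; ring.
Qed.

Lemma conv_scaleL (R : rcfType) (f g : nat -> R) a M :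
  conv (fun i => a * f i) g M = a * conv f g M.
Proof. rewrite /conv mulr_sumr; apply: eq_bigr => i _; ring. Qed.

Lemma conv_scaleR (R : rcfType) (f g : nat -> R) a M :
  conv f (fun i => a * g i) M = a * conv f g M.
Proof. rewrite /conv mulr_sumr; apply: eq_bigr => i _; ring. Qed.


Lemma qq0 (R : rcfType) (x : R) k : qq x k 0 = hh x k.
Proof. by rewrite /qq /hh hermite2_0 fact0 mulr1. Qed.

Definition CC (R : rcfType) (u : R) n' M :=
  conv (hh 0) (fun k => qq u k n') M.

Lemma CC_n (R : rcfType) (u : R) n' M :
  (n'.+1)%:R * CC u n'.+1 M = u * CC u n' M - sh (CC u n') M.
Proof.
rewrite /CC -conv_scaleR.
rewrite (conv_extR _ (g' := fun k => u * qq u k n' - 1 * sh (fun m => qq u m n') k)).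
  by rewrite (conv_linR _ (fun k => qq u k n') (sh (fun m => qq u m n'))) conv_shr mul1r.
by move=> i; rewrite qqS mul1r.
Qed.

Lemma CC_m0 (R : rcfType) (u : R) M :
  (M.+1)%:R * CC u 0 M.+1 = 2 * u * CC u 0 M - 4 * sh (CC u 0) M.
Proof.
rewrite /CC conv_leib.
rewrite (conv_extL _ (f' := fun i => (-2) * sh (hh 0) i)); last first.
  by move=> i; rewrite hhS; ring.
rewrite conv_scaleL conv_shl.
rewrite (conv_extR _ (g' := fun k => (2 * u) * qq u k 0 - 2 * sh (fun m => qq u m 0) k)); last first.
  move=> i; rewrite !qq0 hhS; congr (_ - _ * _).
  by case: i => [|i] //=; rewrite qq0.
rewrite (conv_linR _ (fun k => qq u k 0) (sh (fun m => qq u m 0))) conv_shr.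
have -> : sh (conv (hh 0) (fun k : nat => qq u k 0)) M =
          sh (fun M => conv (hh 0) (fun k : nat => qq u k 0) M) M by [].
ring.
Qed.


Definition SS (R : rcfType) j (f : nat -> R) m :=
  if (j <= m)%N then f (m - j)%N else 0.
Definition aa (R : rcfType) j : R := (-1) ^+ j / (j`!)%:R.

Lemma aaS (R : rcfType) j : (j.+1)%:R * aa R j.+1 = - aa R j.
Proof. rewrite /aa factS natrM exprS. field; by nz. Qed.

Lemma SS_sh (R : rcfType) j (g : nat -> R) m : SS j (sh g) m = SS j.+1 g m.
Proof.
rewrite /SS; case: (ltngtP j m) => H //.
- by rewrite -(subnSK H).
- by subst; rewrite subnn.
Qed.

Lemma SS_Sm (R : rcfType) j (g : nat -> R) m : SS j.+1 g m.+1 = SS j g m.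
Proof. by rewrite /SS ltnS subSS. Qed.

Lemma CC_SS (R : rcfType) (u : R) n' j m :
  (n'.+1)%:R * SS j (CC u n'.+1) m = u * SS j (CC u n') m - SS j.+1 (CC u n') m.
Proof.
rewrite -SS_sh /SS; case: ifP => _; last by rewrite !mulr0 subr0.
by rewrite CC_n.
Qed.

Definition TT (R : rcfType) (u : R) m n :=
  \sum_(j < n.+1) aa R j * SS j (CC u (n - j)%N) m.
Definition FF (R : rcfType) (c u : R) m n := c ^+ (m + n) * TT u m n.

Lemma TT_rec (R : rcfType) (u : R) m n :
  (n.+1)%:R * TT u m n.+1 = u * TT u m n - 2 * sh (fun m => TT u m n) m.
Proof.
rewrite /TT mulr_sumr.
have -> : \sum_(j < n.+2) (n.+1)%:R * (aa R j * SS j (CC u (n.+1 - j)%N) m) =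
   \sum_(j < n.+2) (aa R j * ((n.+1 - j)%N%:R * SS j (CC u (n.+1 - j)%N) m)) +
   \sum_(j < n.+2) ((j%:R * aa R j) * SS j (CC u (n.+1 - j)%N) m).
  rewrite -big_split /=; apply: eq_bigr => i _.
  have : (n.+1)%:R = i%:R + (n.+1 - i)%N%:R :> R.
    by rewrite -natrD subnKC // -ltnS.
  move=> ->; ring.
rewrite big_ord_recr /= subnn mul0r mulr0 addr0.
rewrite (big_ord_recl n.+1) mulr0n !mul0r add0r.
have E1 : forall i : 'I_n.+1, aa R i * ((n.+1 - i)%N%:R * SS i (CC u (n.+1 - i)%N) m)
   = aa R i * (u * SS i (CC u (n - i)%N) m - SS i.+1 (CC u (n - i)%N) m).
  by move=> i; rewrite subSn ?CC_SS // -ltnS.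
rewrite (eq_bigr _ (fun i _ => E1 i)).
have E2 : forall i : 'I_n.+1, (bump 0 i)%:R * aa R (bump 0 i) *
      SS (bump 0 i) (CC u (n.+1 - bump 0 i)%N) m = - (aa R i * SS i.+1 (CC u (n - i)%N) m).
  by move=> i; rewrite /bump /= add1n aaS subSS; ring.
rewrite (eq_bigr _ (fun i _ => E2 i)).
have E3 : \sum_(i < n.+1) aa R i * SS i.+1 (CC u (n - i)%N) m =
          sh (fun m => \sum_(j < n.+1) aa R j * SS j (CC u (n - j)%N) m) m.
  clear E1 E2; case: m => [|m] /=.
    by rewrite big1 // => i _; rewrite /SS /= mulr0.
  by apply: eq_bigr => i _; rewrite SS_Sm.
rewrite sumrN -E3 -sumrB mulr_sumr mulr_sumr -sumrB.
apply: eq_bigr => i _; ring.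
Qed.


Lemma uniq_rec (R : rcfType) (x : R) (f g : nat -> R) :
  f 0%N = g 0%N ->
  (forall k, (k.+1)%:R * f k.+1 = 2 * x * f k - 2 * sh f k) ->
  (forall k, (k.+1)%:R * g k.+1 = 2 * x * g k - 2 * sh g k) ->
  forall k, f k = g k.
Proof.
move=> h0 hf hg.
suff H : forall k, f k = g k /\ f k.+1 = g k.+1 by move=> k; case: (H k).
elim=> [|k [IH1 IH2]].
  split => //; apply: (mulfI (Sneq0 R 0)); by rewrite hf hg /= h0.
split => //; apply: (mulfI (Sneq0 R k.+1)); by rewrite hf hg /= IH1 IH2.
Qed.

Lemma hh0 (R : rcfType) (x : R) : hh x 0 = 1.
Proof. by rewrite /hh /hermite /= hornerC fact0 divr1. Qed.

Lemma FF_rec (R : rcfType) (c u t : R) m n :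
  c * u = t -> 2 * (c * c) = 1 ->
  (n.+1)%:R * FF c u m n.+1 = t * FF c u m n - sh (fun m => FF c u m n) m.
Proof.
move=> hcu hcc.
rewrite /FF mulrCA TT_rec addnS exprS -hcu.
case: m => [|m] /=; first by ring.
rewrite addSn exprS.
have -> : c ^+ (m + n) * TT u m n = 2 * (c*c) * (c ^+ (m + n) * TT u m n) by rewrite hcc mul1r.
ring.
Qed.

Lemma FF_0 (R : rcfType) (c u t : R) m :
  c * u = t -> 2 * (c * c) = 1 -> FF c u m 0 = hh t m.
Proof.
move=> hcu hcc.
have E : forall k, FF c u k 0 = c ^+ k * CC u 0 k.
  move=> k; rewrite /FF /TT big_ord1 addn0 /aa /SS /= expr0 fact0 divr1 mul1r.
  by rewrite !subn0.
move: m; apply: (@uniq_rec R t (fun k => FF c u k 0) (hh t)) => [|k|k].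
- rewrite E /CC /conv big_ord1 /= qq0 !hh0; ring.
- rewrite !E mulrCA CC_m0 exprS -hcu.
  case: k => [|k] /=; first by ring.
  rewrite E exprS.
  have -> : c ^+ k * CC u 0 k = 2*(c*c) * (c ^+ k * CC u 0 k) by rewrite hcc mul1r.
  ring.
- exact: hhS.
Qed.

Lemma main_eq (R : rcfType) (c u t : R) :
  c * u = t -> 2 * (c * c) = 1 -> forall n m, qq t m n = FF c u m n.
Proof.
move=> hcu hcc; elim=> [|n IH] m.
  by rewrite qq0 (FF_0 _ hcu hcc).
apply: (mulfI (Sneq0 R n)); rewrite qqS (FF_rec _ _ hcu hcc) IH.
by case: m => [|m] //=; rewrite IH.
Qed.


Lemma inner_eq (R : rcfType) (t : R) (m n j : nat) :
  \sum_(j <= k < m.+1)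
       ((-1) ^+ j / ((j`!)%:R * ((k - j)`!)%:R) * (hermite R (k - j)).[0]
        * ((hermite2 R (m - k) (n - j)).[Num.sqrt 2 * t]
           / (((m - k)`!)%:R * ((n - j)`!)%:R)))
  = aa R j * SS j (CC (Num.sqrt 2 * t) (n - j)%N) m.
Proof.
rewrite /SS; case: leqP => hj; last first.
  by rewrite big_geq ?mulr0.
rewrite -{1}[j]add0n big_addn big_mkord /CC /conv mulr_sumr subSn //.
apply: eq_bigr => i _.
rewrite addnK (addnC i j) subnDA /aa /hh /qq.
field; by nz.
Qed.

Unset Implicit Arguments. Set Strict Implicit.
Theorem mainTheorem9 (R : rcfType) (m n : nat) (t : R) :
  (hermite2 R m n).[t] =
    (m`! * n`!)%:R * (Num.sqrt (2 : R))^-1 ^+ (m + n) *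
    \sum_(0 <= j < n.+1) \sum_(j <= k < m.+1)
       ((-1) ^+ j / ((j`!)%:R * ((k - j)`!)%:R) * (hermite R (k - j)).[0]
        * ((hermite2 R (m - k) (n - j)).[Num.sqrt 2 * t]
           / (((m - k)`!)%:R * ((n - j)`!)%:R))).
Proof.
have s2 : Num.sqrt (2 : R) != 0 by rewrite sqrtr_eq0 -ltNge ltr0n.
have hcu : (Num.sqrt (2 : R))^-1 * (Num.sqrt 2 * t) = t.
  by rewrite mulrA mulVf // mul1r.
have hcc : 2 * ((Num.sqrt (2 : R))^-1 * (Num.sqrt 2)^-1) = 1.
  rewrite -invfM -expr2 sqr_sqrtr ?ler0n // divff //.
  by rewrite pnatr_eq0.
rewrite big_mkord.
rewrite (eq_bigr (fun j : 'I_n.+1 => aa R j * SS j (CC (Num.sqrt 2 * t) (n - j)%N) m));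
  last by move=> j _; rewrite inner_eq.
rewrite -mulrA -/(TT _ m n) -/(FF _ _ m n) -(main_eq hcu hcc) /qq natrM.
field; by nz.
Qed.
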